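(* Consider the semi-discrete scheme $\frac{d}{dt}\mathbf U_{i,j}=-\frac{\mathcal F^{EC}_{i+\frac12,j}-\mathcal F^{EC}_{i-\frac12,j}}{\Delta x}-\frac{\mathcal G^{EC}_{i,j+\frac12}-\mathcal G^{EC}_{i,j-\frac12}}{\Delta y}+\mathbf S_{i,j}$ with the fluxes and source term given in the context, and suppose the bottom values $\mathbf B_{i,j}$ are independent of time. If $\mathbf q^x_{i,j}=\mathbf q^y_{i,j}=0$ and $\mathbf h_{i,j}+\mathbf B_{i,j}=\mathbf C$ for all $i,j$ (with $\mathbf C\in\mathbb R^K$ a fixed vector), then $\frac{d}{dt}\mathbf h_{i,j}=\frac{d}{dt}\mathbf q^x_{i,j}=\frac{d}{dt}\mathbf q^y_{i,j}=0$ for all $i,j$; i.e., the scheme is well-balanced.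
   Context: Let $\mathcal M_k\in\mathbb R^{K\times K}$, $(\mathcal M_k)_{l,m}=\int\phi_k\phi_l\phi_m\rho$, where $\phi_1\equiv1,\dots,\phi_K$ are polynomials orthonormal with respect to a probability density $\rho$; $\mathcal P(\widehat z)=\sum_k\widehat z_k\mathcal M_k$; $g>0$. Uniform rectangular grid with cell sizes $\Delta x,\Delta y$; cell values $\mathbf U_{i,j}=(\mathbf h_{i,j},\mathbf q^x_{i,j},\mathbf q^y_{i,j})\in\mathbb R^{3K}$, bottom values $\mathbf B_{i,j}\in\mathbb R^K$, with $\mathcal P(\mathbf h_{i,j})$ positive definite; $\mathbf u_{i,j}=\mathcal P^{-1}(\mathbf h_{i,j})\mathbf q^x_{i,j}$, $\mathbf v_{i,j}=\mathcal P^{-1}(\mathbf h_{i,j})\mathbf q^y_{i,j}$. Averages/jumps: $\overline{\mathbf a}_{i+\frac12,j}=\tfrac12(\mathbf a_{i,j}+\mathbf a_{i+1,j})$, $[\![\mathbf a]\!]_{i+\frac12,j}=\mathbf a_{i+1,j}-\mathbf a_{i,j}$, analogously in $j$; $\overline{\mathcal P(\mathbf h)\mathbf h}$ is the average of $\mathcal P(\mathbf h_{i,j})\mathbf h_{i,j}$. $\mathcal F^{EC}_{i+\frac12,j}=\big(\mathcal P(\overline{\mathbf h})\overline{\mathbf u};\ \tfrac12 g\,\overline{\mathcal P(\mathbf h)\mathbf h}+\mathcal P(\overline{\mathbf u})\mathcal P(\overline{\mathbf h})\overline{\mathbf u};\ \mathcal P(\overline{\mathbf v})\mathcal P(\overline{\mathbf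 h})\overline{\mathbf u}\big)_{i+\frac12,j}$, $\mathcal G^{EC}_{i,j+\frac12}=\big(\mathcal P(\overline{\mathbf h})\overline{\mathbf v};\ \mathcal P(\overline{\mathbf u})\mathcal P(\overline{\mathbf h})\overline{\mathbf v};\ \tfrac12 g\,\overline{\mathcal P(\mathbf h)\mathbf h}+\mathcal P(\overline{\mathbf v})\mathcal P(\overline{\mathbf h})\overline{\mathbf v}\big)_{i,j+\frac12}$, $\mathbf S_{i,j}=\Big(0;\ -\tfrac{g}{2\Delta x}\big(\mathcal P(\overline{\mathbf h}_{i+\frac12,j})[\![\mathbf B]\!]_{i+\frac12,j}+\mathcal P(\overline{\mathbf h}_{i-\frac12,j})[\![\mathbf B]\!]_{i-\frac12,j}\big);\ -\tfrac{g}{2\Delta y}\big(\mathcal P(\overline{\mathbf h}_{i,j+\frac12})[\![\mathbf B]\!]_{i,j+\frac12}+\mathcal P(\overline{\mathbf h}_{i,j-\frac12})[\![\mathbf B]\!]_{i,j-\frac12}\big)\Big)$ ($K$-blocks separated by semicolons). *)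

(* Defs.v *)
From HB Require Import structures.
From mathcomp Require Import all_boot all_order all_algebra.
From mathcomp Require Import all_classical all_reals all_analysis.
Set Implicit Arguments. Unset Strict Implicit. Unset Printing Implicit Defensive.
Import Order.TTheory GRing.Theory Num.Theory.
Local Open Scope ring_scope.

Section SGSWE.
Variables (R : realType) (K : nat).
(* The stochastic Galerkin basis has K.+1 >= 1 elements, indexed by 'I_K.+1;
   phi ord0 plays the role of phi_1 == 1. *)
Variable (rho : R -> R) (phi : 'I_K.+1 -> {poly R}).

Definition Mk (k : 'I_K.+1) : 'M[R]_K.+1 :=
  \matrix_(l, m) Rintegral (@lebesgue_measure R) setT
     (fun x => (phi k).[x] * (phi l).[x] * (phi m).[x] * rho x).

Definition Pmat (z : 'cV[R]_K.+1) : 'M[R]_K.+1 := \sum_k z k ord0 *: Mk k.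

Definition posdef (A : 'M[R]_K.+1) : Prop :=
  forall x : 'cV[R]_K.+1, x != 0 -> 0 < ((x^T *m A *m x) ord0 ord0).

Definition avg (a b : 'cV[R]_K.+1) : 'cV[R]_K.+1 := 2^-1 *: (a + b).

Definition vel (h q : 'cV[R]_K.+1) : 'cV[R]_K.+1 := invmx (Pmat h) *m q.

Variable g : R.

Definition FEC_h (hL qxL qyL hR qxR qyR : 'cV[R]_K.+1) : 'cV[R]_K.+1 :=
  Pmat (avg hL hR) *m avg (vel hL qxL) (vel hR qxR).
Definition FEC_qx (hL qxL qyL hR qxR qyR : 'cV[R]_K.+1) : 'cV[R]_K.+1 :=
  (2^-1 * g) *: avg (Pmat hL *m hL) (Pmat hR *m hR)
  + Pmat (avg (vel hL qxL) (vel hR qxR)) *m Pmat (avg hL hR)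
      *m avg (vel hL qxL) (vel hR qxR).
Definition FEC_qy (hL qxL qyL hR qxR qyR : 'cV[R]_K.+1) : 'cV[R]_K.+1 :=
  Pmat (avg (vel hL qyL) (vel hR qyR)) *m Pmat (avg hL hR)
      *m avg (vel hL qxL) (vel hR qxR).

Definition GEC_h (hL qxL qyL hR qxR qyR : 'cV[R]_K.+1) : 'cV[R]_K.+1 :=
  Pmat (avg hL hR) *m avg (vel hL qyL) (vel hR qyR).
Definition GEC_qx (hL qxL qyL hR qxR qyR : 'cV[R]_K.+1) : 'cV[R]_K.+1 :=
  Pmat (avg (vel hL qxL) (vel hR qxR)) *m Pmat (avg hL hR)
      *m avg (vel hL qyL) (vel hR qyR).
Definition GEC_qy (hL qxL qyL hR qxR qyR : 'cV[R]_K.+1) : 'cV[R]_K.+1 :=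
  (2^-1 * g) *: avg (Pmat hL *m hL) (Pmat hR *m hR)
  + Pmat (avg (vel hL qyL) (vel hR qyR)) *m Pmat (avg hL hR)
      *m avg (vel hL qyL) (vel hR qyR).

Variables (dx dy : R).
Variables (h qx qy B : int -> int -> 'cV[R]_K.+1).

(* x-interface i+1/2 at row j : between cells (i,j) and (i+1,j) *)
Definition Fx (f : 'cV[R]_K.+1 -> 'cV[R]_K.+1 -> 'cV[R]_K.+1 ->
                   'cV[R]_K.+1 -> 'cV[R]_K.+1 -> 'cV[R]_K.+1 -> 'cV[R]_K.+1)
  (i j : int) : 'cV[R]_K.+1 :=
  f (h i j) (qx i j) (qy i j) (h (i + 1) j) (qx (i + 1) j) (qy (i + 1) j).
(* y-interface j+1/2 at column i : between cells (i,j) and (i,j+1) *)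
Definition Gy (f : 'cV[R]_K.+1 -> 'cV[R]_K.+1 -> 'cV[R]_K.+1 ->
                   'cV[R]_K.+1 -> 'cV[R]_K.+1 -> 'cV[R]_K.+1 -> 'cV[R]_K.+1)
  (i j : int) : 'cV[R]_K.+1 :=
  f (h i j) (qx i j) (qy i j) (h i (j + 1)) (qx i (j + 1)) (qy i (j + 1)).

(* source term S_{i,j} (second and third blocks; first block is 0) *)
Definition S_qx (i j : int) : 'cV[R]_K.+1 :=
  - (g / (2 * dx)) *:
     (Pmat (avg (h i j) (h (i + 1) j)) *m (B (i + 1) j - B i j)
      + Pmat (avg (h (i - 1) j) (h i j)) *m (B i j - B (i - 1) j)).
Definition S_qy (i j : int) : 'cV[R]_K.+1 :=
  - (g / (2 * dy)) *:
     (Pmat (avg (h i j) (h i (j + 1))) *m (B i (j + 1) - B i j)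
      + Pmat (avg (h i (j - 1)) (h i j)) *m (B i j - B i (j - 1))).

Definition rhs_h (i j : int) : 'cV[R]_K.+1 :=
  - (dx^-1 *: (Fx FEC_h i j - Fx FEC_h (i - 1) j))
  - (dy^-1 *: (Gy GEC_h i j - Gy GEC_h i (j - 1))).
Definition rhs_qx (i j : int) : 'cV[R]_K.+1 :=
  - (dx^-1 *: (Fx FEC_qx i j - Fx FEC_qx (i - 1) j))
  - (dy^-1 *: (Gy GEC_qx i j - Gy GEC_qx i (j - 1))) + S_qx i j.
Definition rhs_qy (i j : int) : 'cV[R]_K.+1 :=
  - (dx^-1 *: (Fx FEC_qy i j - Fx FEC_qy (i - 1) j))
  - (dy^-1 *: (Gy GEC_qy i j - Gy GEC_qy i (j - 1))) + S_qy i j.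

End SGSWE.

(* Main.v *)
Require Import Defs.
From HB Require Import structures.
From mathcomp Require Import all_boot all_order all_algebra.
From mathcomp Require Import all_classical all_reals all_analysis.
Import Order.TTheory GRing.Theory Num.Theory.
Local Open Scope ring_scope.
From mathcomp Require Import ring.
Lemma Mk_sym (R : realType) (K : nat) (rho : R -> R) (phi : 'I_K.+1 -> {poly R}) k l m :
  Mk rho phi k l m = Mk rho phi m l k.
Proof.
rewrite !mxE; congr Rintegral; apply/funext => x; ring.
Qed.

Lemma Pmat_comm (R : realType) (K : nat) (rho : R -> R) (phi : 'I_K.+1 -> {poly R}) a b :
  Pmat rho phi a *m b = Pmat rho phi b *m a.
Proof.
apply/matrixP => l c; rewrite !mxE.
under eq_bigr => m _ do rewrite /Pmat summxE big_distrl /=.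
under [RHS]eq_bigr => m _ do rewrite /Pmat summxE big_distrl /=.
rewrite exchange_big /=; apply: eq_bigr => k _; apply: eq_bigr => m _.
rewrite [in RHS]mxE [in LHS]mxE (@Mk_sym R K rho phi m l k) (ord1 c); ring.
Qed.

Lemma Pmat_lin (R : realType) (K : nat) (rho : R -> R) (phi : 'I_K.+1 -> {poly R}) (c : R) a b :
  Pmat rho phi (c *: (a + b)) = c *: (Pmat rho phi a + Pmat rho phi b).
Proof.
rewrite /Pmat [RHS]scalerDr !scaler_sumr -big_split /=; apply: eq_bigr => k _.
by rewrite !mxE !scalerA -scalerDl mulrDr.
Qed.

Lemma key (R : realType) (K : nat) (rho : R -> R) (phi : 'I_K.+1 -> {poly R}) a b :
  Pmat rho phi (avg a b) *m (a - b) =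
  2^-1 *: (Pmat rho phi a *m a - Pmat rho phi b *m b).
Proof.
rewrite /avg Pmat_lin -scalemxAl mulmxDl !mulmxBr (@Pmat_comm _ _ _ _ a b).
congr (_ *: _); rewrite addrA addrNK; done.
Qed.

Lemma vel0 (R : realType) (K : nat) (rho : R -> R) (phi : 'I_K.+1 -> {poly R}) a :
  vel rho phi a 0 = 0.
Proof. by rewrite /vel mulmx0. Qed.

Lemma avg00 (R : realType) (K : nat) : avg (0 : 'cV[R]_K.+1) 0 = 0.
Proof. by rewrite /avg addr0 scaler0. Qed.

Lemma Pmat0 (R : realType) (K : nat) (rho : R -> R) (phi : 'I_K.+1 -> {poly R}) :
  Pmat rho phi 0 = 0.
Proof. by rewrite /Pmat big1 // => k _; rewrite mxE scale0r. Qed.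
Theorem lemma4p3 (R : realType) (K : nat) (rho : R -> R)
  (phi : 'I_K.+1 -> {poly R}) (g dx dy : R)
  (h qx qy : R -> int -> int -> 'cV[R]_K.+1) (B : int -> int -> 'cV[R]_K.+1)
  (C : 'cV[R]_K.+1) (t0 : R) :
  (* rho is a probability density on R *)
  measurable_fun setT rho ->
  (forall x, 0 <= rho x) ->
  (\int[@lebesgue_measure R]_x (rho x)%:E = 1)%E ->
  (* phi_1 == 1 and the phi_k are orthonormal w.r.t. rho *)
  phi ord0 = 1 ->
  (forall k l : 'I_K.+1,
     (\int[@lebesgue_measure R]_x ((phi k).[x] * (phi l).[x] * rho x)%:E
       = ((k == l)%:R)%:E)%E) ->
  (* the integrals defining the M_k exist *)
  (forall k l m : 'I_K.+1,
     (@lebesgue_measure R).-integrable setT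
       (fun x => ((phi k).[x] * (phi l).[x] * (phi m).[x] * rho x)%:E)) ->
  0 < g -> 0 < dx -> 0 < dy ->
  (* P(h_{i,j}) positive definite *)
  (forall t i j, posdef (Pmat rho phi (h t i j))) ->
  (* the semi-discrete scheme (bottom B independent of time) *)
  (forall t i j (k : 'I_K.+1),
     is_derive t (1 : R) (fun s => h s i j k ord0)
       (rhs_h rho phi dx dy (h t) (qx t) (qy t) i j k ord0)) ->
  (forall t i j (k : 'I_K.+1),
     is_derive t (1 : R) (fun s => qx s i j k ord0)
       (rhs_qx rho phi g dx dy (h t) (qx t) (qy t) B i j k ord0)) ->
  (forall t i j (k : 'I_K.+1),
     is_derive t (1 : R) (fun s => qy s i j k ord0)
       (rhs_qy rho phi g dx dy (h t) (qx t) (qy t) B i j k ord0)) ->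
  (* lake at rest at time t0 *)
  (forall i j, qx t0 i j = 0 /\ qy t0 i j = 0 /\ h t0 i j + B i j = C) ->
  forall i j (k : 'I_K.+1),
    derive1 (fun s => h s i j k ord0) t0 = 0 /\
    derive1 (fun s => qx s i j k ord0) t0 = 0 /\
    derive1 (fun s => qy s i j k ord0) t0 = 0.
Proof.
move=> _ _ _ _ _ _ hg hdx hdy _ Dh Dqx Dqy rest i j k.
have qx0 : forall i j, qx t0 i j = 0 by move=> i' j'; case: (rest i' j').
have qy0 : forall i j, qy t0 i j = 0 by move=> i' j'; case: (rest i' j') => _ [].
have B0 : forall i j, B i j = C - h t0 i j.
  by move=> i' j'; case: (rest i' j') => _ [_ <-]; rewrite addrC addKr.
rewrite !derive1E (@derive_val _ _ _ _ _ _ _ (Dh t0 i j k)) (@derive_val _ _ _ _ _ _ _ (Dqx t0 i j k))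
  (@derive_val _ _ _ _ _ _ _ (Dqy t0 i j k)).
have dx0 : dx != 0 by rewrite gt_eqF.
have dy0 : dy != 0 by rewrite gt_eqF.
split; [|split].
- rewrite /rhs_h /Fx /Gy /FEC_h /GEC_h !qx0 !qy0 !vel0 !avg00 !mulmx0.
  by rewrite !mxE; ring.
- rewrite /rhs_qx /Fx /Gy /FEC_qx /GEC_qx /S_qx !qx0 !qy0 !vel0 !avg00 !Pmat0 ?mul0mx ?mulmx0 ?addr0.
  rewrite !B0 !opprB !addrA !subrK.
  have E : forall a b : 'cV[R]_K.+1, C - a + b - C = b - a.
    by move=> a b; apply/matrixP => ? ?; rewrite !mxE; ring.
  rewrite !E !key /avg.
  move: (Pmat rho phi (h t0 i j) *m h t0 i j) => X.
  move: (Pmat rho phi (h t0 (i + 1) j) *m h t0 (i + 1) j) => Y.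
  move: (Pmat rho phi (h t0 (i - 1) j) *m h t0 (i - 1) j) => Z.
  by rewrite !mxE; field; rewrite dx0 dy0.
- rewrite /rhs_qy /Fx /Gy /FEC_qy /GEC_qy /S_qy !qx0 !qy0 !vel0 !avg00 !Pmat0 ?mul0mx ?mulmx0 ?addr0.
  rewrite !B0 !opprB !addrA !subrK.
  have E : forall a b : 'cV[R]_K.+1, C - a + b - C = b - a.
    by move=> a b; apply/matrixP => ? ?; rewrite !mxE; ring.
  rewrite !E !key /avg.
  move: (Pmat rho phi (h t0 i j) *m h t0 i j) => X.
  move: (Pmat rho phi (h t0 i (j + 1)) *m h t0 i (j + 1)) => Y.
  move: (Pmat rho phi (h t0 i (j - 1)) *m h t0 i (j - 1)) => Z.
  by rewrite !mxE; field; rewrite dx0 dy0.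
Qed.
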